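(* Let $L$ be a finite simplicial complex, $H\subseteq L$ a hypergraph, and $k\geq 1$, with $\mathrm{Ext}=\Delta\gamma\delta\gamma$ and $\mathrm{Int}=\delta\gamma\Delta\gamma$. (a) If $H\neq\emptyset$, then $\max(L)\cap\mathrm{Ext}^k(H)$ equals the set of all simplices occurring in some broad path $\tau_1\cdots\tau_k$ of length $k$ in $L$ for which there is $\sigma\in H$ with $\sigma\subseteq\tau_1$. (b) If $H\neq L$, then $\gamma\,\mathrm{Int}^k(H)$ equals the set of all simplices occurring in some path $\tau'_1\cdots\tau'_k$ of length $k$ in $L$ for which there is $\sigma'\in\gamma H$ with $\tau'_1\cap\sigma'\neq\emptyset$.
   Context: $L$ is a finite collection of nonempty sets closed under nonempty subsets; a hypergraph in $L$ is any subset of $L$. Operators on subsets $H\subseteq L$: $\Delta H=\{\sigma\in L:\exists\tau\in H,\sigma\subseteq\tau\}$, $\delta H=\{\sigma\in L:\text{every nonempty }\tau\subseteq\sigma\text{ lies in }H\}$, $\gamma H=L\setminus H$. $\max(L)$ is the set of maximal faces of $L$. A path is a sequence $\tau_1\cdots\tau_m$ of simplices of $L$ with $\tau_i\cap\tau_{i+1}\neq\emptyset$; its length is $m$. A broad path is a path consisting of maximal faces of $L$. *)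

(* Defs.v *)
From mathcomp Require Import all_boot.
Set Implicit Arguments. Unset Strict Implicit. Unset Printing Implicit Defensive.

Section Defs.
Variable V : finType.
Variable L : {set {set V}}.

Definition simplicial_complex : Prop :=
  set0 \notin L /\
  forall s t : {set V}, s \in L -> t \subset s -> t != set0 -> t \in L.

Definition Delta (H : {set {set V}}) : {set {set V}} :=
  [set s in L | [exists t in H, s \subset t]].

Definition delta (H : {set {set V}}) : {set {set V}} :=
  [set s in L | [forall t : {set V}, ((t != set0) && (t \subset s)) ==> (t \in H)]].

Definition gamma (H : {set {set V}}) : {set {set V}} := L :\: H.

Definition Ext (H : {set {set V}}) : {set {set V}} := Delta (gamma (delta (gamma H))).
Definition Int (H : {set {set V}}) : {set {set V}} := delta (gamma (Delta (gamma H))).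

Definition maxL : {set {set V}} :=
  [set s in L | [forall t in L, (s \subset t) ==> (t == s)]].

Definition meets (a b : {set V}) : bool := a :&: b != set0.

Definition is_path (t1 : {set V}) (q : seq {set V}) : bool :=
  all (fun t => t \in L) (t1 :: q) && path meets t1 q.

Definition is_broad_path (t1 : {set V}) (q : seq {set V}) : bool :=
  is_path t1 q && all (fun t => t \in maxL) (t1 :: q).

End Defs.

(* Main.v *)
Require Import Defs.
From mathcomp Require Import all_boot.
Set Implicit Arguments. Unset Strict Implicit. Unset Printing Implicit Defensive.

Section Reach.
Variables (T : finType) (A P : pred T) (e : rel T).

Fixpoint reach (n : nat) (s : T) : bool :=
  match n with
  | 0 => A s && P s
  | m.+1 => A s && [exists u, reach m u && e u s]
  end.

Lemma reachA n s : reach n s -> A s.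
Proof. by case: n => [|n] /= /andP[]. Qed.

Hypothesis hr : forall s, A s -> e s s.

Lemma reach_mono n s : reach n s -> reach n.+1 s.
Proof.
move=> h; rewrite /= (reachA h); apply/existsP; exists s.
by rewrite h hr // (reachA h).
Qed.

Lemma reach_monoD m d s : reach m s -> reach (m + d) s.
Proof.
elim: d => [|d IH]; rewrite ?addn0 ?addnS // => h; exact: reach_mono (IH h).
Qed.

Lemma reach_end q t1 : all A (t1 :: q) -> path e t1 q -> P t1 ->
  reach (size q) (last t1 q).
Proof.
elim/last_ind: q => [|q y IH].
  by move=> /= /andP[At _] _ Pt; rewrite At Pt.
rewrite -rcons_cons all_rcons rcons_path size_rcons last_rcons.
move=> /andP[Ay Aq] /andP[pq ey] Pt /=.
rewrite Ay /=; apply/existsP; exists (last t1 q); rewrite ey IH //.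
Qed.

Lemma reach_start n s : reach n s -> exists t1 q,
  [/\ size q = n, all A (t1 :: q), path e t1 q, P t1 & last t1 q = s].
Proof.
elim: n s => [|n IH] s /=.
  by move/andP=> [As Ps]; exists s, [::]; rewrite /= As Ps.
case/andP=> As /existsP[u /andP[ru eus]].
case: (IH u ru) => t1 [q [sq Aq pq Pt lq]].
exists t1, (rcons q s); split; rewrite ?size_rcons ?sq ?last_rcons //.
  by move: Aq; rewrite /= all_rcons As =>/andP[-> ->].
by rewrite rcons_path pq lq eus.
Qed.

Lemma reach_path n s : reach n s <-> exists t1 q,
  [/\ size (t1 :: q) = n.+1, all A (t1 :: q), path e t1 q, P t1 & s \in t1 :: q].
Proof.
split.
  case/reach_start => t1 [q [sq Aq pq Pt lq]]; exists t1, q; split => //.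
    by rewrite /= sq.
  by rewrite -lq mem_last.
case=> t1 [q [[sq] Aq pq Pt sin]].
rewrite in_cons in sin; case/orP: sin => [/eqP-> | sq'].
  have At : all A [:: t1] by move: Aq => /andP[At _]; rewrite /= At.
  have := reach_monoD n (@reach_end [::] t1 At erefl Pt).
  by rewrite add0n.
move: Aq pq sq; case/path.splitP: sq' => p1 p2.
rewrite -cat_cons all_cat cat_path size_cat size_rcons => /andP[A1 _] /andP[p1' _] <-.
have := reach_end A1 p1' Pt; rewrite last_rcons size_rcons => h.
exact: reach_monoD.
Qed.
End Reach.
Section Main.
Variables (V : finType) (L : {set {set V}}).
Hypothesis hL : simplicial_complex L.

Lemma sc_sub (s t : {set V}) : s \in L -> t \subset s -> t != set0 -> t \in L.
Proof. by case: hL => _; apply. Qed.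

Lemma sc_ne (s : {set V}) : s \in L -> s != set0.
Proof. by case: hL => h0 _ sL; apply: contraNneq h0 => <-. Qed.

Lemma up_max (t : {set V}) : t \in L -> exists2 m, m \in maxL L & t \subset m.
Proof.
move=> tL.
have [|m /andP[mL tm] mmax] :=
  @arg_maxnP _ t (fun m : {set V} => (m \in L) && (t \subset m)) (fun m => #|m|)
   _.
  by rewrite /= tL subxx.
exists m => //; rewrite inE mL; apply/forallP => m'; apply/implyP => m'L.
apply/implyP => mm'; rewrite eq_sym eqEcard mm' /=; apply: mmax.
by rewrite m'L (subset_trans tm mm').
Qed.

Lemma maxL_eq (s t : {set V}) : s \in maxL L -> t \in L -> s \subset t -> t = s.
Proof.
rewrite inE => /andP[_ /forallP h] tL st; apply/eqP.
by have := h t; rewrite tL st.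
Qed.

Lemma maxL_L (s : {set V}) : s \in maxL L -> s \in L.
Proof. by rewrite inE => /andP[]. Qed.

Lemma gdg (X : {set {set V}}) (t : {set V}) : X \subset L ->
  (t \in gamma L (delta L (gamma L X))) = (t \in L) && [exists x in X, x \subset t].
Proof.
move=> XL; rewrite /gamma /delta !inE.
case tL: (t \in L); rewrite ?andbF ?andbT //=.
apply/idP/idP.
  move/forallPn => [x]; rewrite negb_imply => /andP[/andP[x0 xt]].
  rewrite !inE negb_and negbK (sc_sub tL xt x0) orbF => xX.
  by apply/existsP; exists x; rewrite xX xt.
case/existsP => x /andP[xX xt]; apply/forallPn; exists x.
have xL : x \in L := subsetP XL x xX.
by rewrite negb_imply (sc_ne xL) xt !inE xX.
Qed.

Lemma Ext_max (X : {set {set V}}) (s : {set V}) : X \subset L -> s \in maxL L ->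
  (s \in Ext L X) = [exists x in X, x \subset s].
Proof.
move=> XL sM; rewrite /Ext /Delta inE (maxL_L sM) /=.
apply/idP/idP.
  case/existsP => t /andP[]; rewrite gdg // => /andP[tL ex] st.
  by rewrite -(maxL_eq sM tL st).
move=> ex; apply/existsP; exists s; rewrite subxx andbT gdg // ex.
by rewrite (maxL_L sM).
Qed.

Lemma Ext_sub (X : {set {set V}}) : Ext L X \subset L.
Proof. by apply/subsetP => s; rewrite inE => /andP[]. Qed.

Lemma iterExt_sub (H : {set {set V}}) n : H \subset L -> iter n (Ext L) H \subset L.
Proof. by case: n => [|n] //= _; apply: Ext_sub. Qed.

Lemma partA (H : {set {set V}}) n (s : {set V}) : H \subset L ->
  (s \in maxL L :&: iter n.+1 (Ext L) H) =
  reach (fun t => t \in maxL L) (fun t => [exists x in H, x \subset t]) (meets (V:=V)) n s.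
Proof.
move=> HL; elim: n s => [|n IH] s.
  by rewrite inE /= andbC; case sM: (s \in maxL L); rewrite ?andbT ?andbF //= Ext_max.
rewrite inE /=; case sM: (s \in maxL L) => //=.
rewrite Ext_max ?Ext_sub //.
apply/idP/idP.
  case/existsP => x /andP[xE xs].
  move: xE; rewrite /Ext /Delta inE => /andP[xL /existsP[t /andP[]]].
  rewrite gdg ?iterExt_sub // => /andP[tL ex] xt.
  have [m mM tm] := up_max tL.
  apply/existsP; exists m; rewrite -IH inE mM /= Ext_max ?iterExt_sub //.
  case/existsP: ex => y /andP[yY yt].
  apply/andP; split; first by apply/existsP; exists y; rewrite yY (subset_trans yt tm).
  rewrite /meets; apply: contra_neq (sc_ne xL) => h.
  by apply/eqP; rewrite -subset0 -h subsetI (subset_trans xt tm) xs.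
case/existsP => u /andP[]; rewrite -IH inE => /andP[uM uE] mus.
have xL : u :&: s \in L := sc_sub (maxL_L uM) (subsetIl u s) mus.
apply/existsP; exists (u :&: s); rewrite subsetIr andbT.
rewrite /Ext /Delta inE xL /=; apply/existsP; exists u; rewrite subsetIl andbT.
rewrite gdg ?iterExt_sub // (maxL_L uM) /= -Ext_max ?iterExt_sub //.
Qed.

Lemma gInt (X : {set {set V}}) (s : {set V}) : (s \in gamma L (Int L X)) =
  (s \in L) && [exists u in gamma L X, s :&: u != set0].
Proof.
rewrite /Int /gamma /delta /Delta !inE.
case sL: (s \in L); rewrite ?andbF ?andbT //=.
apply/idP/idP.
  move/forallPn => [t]; rewrite negb_imply => /andP[/andP[t0 ts]].
  rewrite !inE negb_and negbK (sc_sub sL ts t0) orbF /= => /existsP[u /andP[uG tu]].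
  apply/existsP; exists u; rewrite uG /=; apply: contra_neq t0 => h.
  by apply/eqP; rewrite -subset0 -h subsetI ts tu.
case/existsP => u /andP[uG su0].
have uL : u \in L by move: uG; rewrite !inE => /andP[].
have tL : s :&: u \in L := sc_sub sL (subsetIl s u) su0.
apply/forallPn; exists (s :&: u).
rewrite negb_imply su0 subsetIl !inE negb_and negbK tL orbF /=.
by apply/existsP; exists u; rewrite uG subsetIr.
Qed.

Lemma partB (H : {set {set V}}) n (s : {set V}) :
  (s \in gamma L (iter n.+1 (Int L) H)) =
  reach (fun t => t \in L) (fun t => [exists u in gamma L H, t :&: u != set0])
    (meets (V:=V)) n s.
Proof.
elim: n s => [|n IH] s; rewrite [iter _ _ _]/= gInt //=.
case sL: (s \in L) => //=.
apply/idP/idP => /existsP[u /andP[uG su]]; apply/existsP; exists u.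
  by rewrite -IH uG /meets setIC.
by rewrite IH uG /meets setIC.
Qed.
End Main.

Theorem lemma3p3 (V : finType) (L H : {set {set V}}) (k : nat) :
  simplicial_complex L -> H \subset L -> 1 <= k ->
  (H != set0 ->
     forall s : {set V},
       s \in maxL L :&: iter k (Ext L) H <->
       exists (t1 : {set V}) (q : seq {set V}),
         [/\ size (t1 :: q) = k, is_broad_path L t1 q,
             (exists2 sigma, sigma \in H & sigma \subset t1)
           & s \in t1 :: q]) /\
  (H != L ->
     forall s : {set V},
       s \in gamma L (iter k (Int L) H) <->
       exists (t1 : {set V}) (q : seq {set V}),
         [/\ size (t1 :: q) = k, is_path L t1 q,
             (exists2 sigma, sigma \in gamma L H & t1 :&: sigma != set0)
           & s \in t1 :: q]).
Proof.
move=> hL HL; case: k => // n _; split => _ s.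
  have hr : forall t, t \in maxL L -> meets t t.
    by move=> t tM; rewrite /meets setIid (sc_ne hL (maxL_L tM)).
  rewrite partA //; apply: iff_trans (@reach_path _ _ _ (meets (V:=V)) hr n s) _.
  split.
    case=> t1 [q [sq Aq pq Pt sin]]; exists t1, q; split => //.
      apply/andP; split => //; rewrite /is_path pq andbT.
      apply/allP => x /(allP Aq); exact: maxL_L.
    by case/existsP: Pt => x /andP[xH xt]; exists x.
  case=> t1 [q [sq /andP[/andP[_ pq] Aq] [x xH xt] sin]]; exists t1, q; split => //.
  by apply/existsP; exists x; rewrite xH xt.
have hr : forall t, t \in L -> meets t t.
  by move=> t tL; rewrite /meets setIid (sc_ne hL tL).
rewrite partB //; apply: iff_trans (@reach_path _ _ _ (meets (V:=V)) hr n s) _.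
split.
  case=> t1 [q [sq Aq pq Pt sin]]; exists t1, q; split => //.
    by rewrite /is_path Aq pq.
  by case/existsP: Pt => x /andP[xH xt]; exists x.
case=> t1 [q [sq /andP[Aq pq] [x xH xt] sin]]; exists t1, q; split => //.
by apply/existsP; exists x; rewrite xH xt.
Qed.
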